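(* Let $\mathbb{A}$ be a medial algebra over a field of characteristic not $2,3$ and let $c$ be a nonzero idempotent of $\mathbb{A}$. Then the Peirce subspace $\mathbb{A}_c(0)=\ker L_c$ is an ideal of $\mathbb{A}$ and the quotient $\mathbb{A}'=\mathbb{A}/\mathbb{A}_c(0)$ is a medial algebra. If additionally $c$ is semi-simple, then $\mathbb{A}'_{c'}(0)=0$, where $c'$ is the class of $c$ in $\mathbb{A}'$.
   Context: All algebras commutative, possibly nonassociative, finite-dimensional. Medial: $(xy)(zw)=(xz)(yw)$ identically. $L_c:x\mapsto cx$, $\mathbb{A}_c(\lambda)=\ker(L_c-\lambda\mathbf{1})$. An idempotent $c$ is semi-simple if $\mathbb{A}$ is the direct sum of the eigenspaces $\mathbb{A}_c(\lambda)$ over the distinct eigenvalues $\lambda$ of $L_c$. *)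

(* Defs.v *)
From HB Require Import structures.
From mathcomp Require Import all_boot all_order all_algebra.
Set Implicit Arguments. Unset Strict Implicit. Unset Printing Implicit Defensive.
Import GRing.Theory.
Local Open Scope ring_scope.

(* A commutative (possibly nonassociative) finite-dimensional algebra over K
   is a finite-dimensional K-vector space V (vectType) with a multiplication
   mul : V -> V -> V that is commutative and linear in each argument
   (linearity in the second argument + commutativity gives bilinearity). *)
Definition comm_alg_law (K : fieldType) (V : vectType K) (mul : V -> V -> V) :=
  (forall x y, mul x y = mul y x) /\ (forall x, linear (mul x)).

Definition medial (K : fieldType) (V : vectType K) (mul : V -> V -> V) :=
  forall x y z w, mul (mul x y) (mul z w) = mul (mul x z) (mul y w).

Definition Lmul (K : fieldType) (V : vectType K) (mul : V -> V -> V) (c : V)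
  : 'End(V) := linfun (mul c).

Definition peirce (K : fieldType) (V : vectType K) (mul : V -> V -> V) (c : V)
  (l : K) : {vspace V} := lker (Lmul mul c - l *: \1%VF).

Definition idem_elt (K : fieldType) (V : vectType K) (mul : V -> V -> V) (c : V) :=
  mul c c = c.

Definition is_ideal (K : fieldType) (V : vectType K) (mul : V -> V -> V)
  (I : {vspace V}) :=
  forall x y, x \in I -> (mul x y \in I) /\ (mul y x \in I).

(* c is semi-simple: V is the direct sum of the eigenspaces A_c(l) over the
   distinct eigenvalues l of L_c, i.e. the l with
   A_c(l) <> 0 (listed without repetition by s). *)
Definition semi_simple (K : fieldType) (V : vectType K) (mul : V -> V -> V) (c : V) :=
  exists s : seq K,
    [/\ uniq s,
        (forall l, (peirce mul c l != 0%VS) = (l \in s)),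
        directv (\sum_(i < size s) peirce mul c s`_i)%VS
      & (\sum_(i < size s) peirce mul c s`_i)%VS = fullv].

(* pi : V -> B is a quotient map of algebras with kernel I: a surjective
   linear map, multiplicative, whose kernel is exactly I. Any such (B, mulB)
   is (isomorphic to) the quotient algebra V / I. *)
Definition quotient_map (K : fieldType) (V B : vectType K)
  (mul : V -> V -> V) (mulB : B -> B -> B) (I : {vspace V}) (pi : 'Hom(V, B)) :=
  [/\ limg pi = fullv, lker pi = I & forall x y, pi (mul x y) = mulB (pi x) (pi y)].

(* Main.v *)
Require Import Defs.
From HB Require Import structures.
From mathcomp Require Import all_boot all_order all_algebra.
Import GRing.Theory.
Local Open Scope ring_scope.

Section Helpers.
Variables (K : fieldType) (V : vectType K) (mul : V -> V -> V).
Hypothesis Hlin : forall x, linear (mul x).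

Definition mulL x : {linear V -> V} :=
  HB.pack (mul x) (GRing.isLinear.Build K V V *:%R (mul x) (Hlin x)).

Lemma LmulE c v : Lmul mul c v = mul c v.
Proof. by rewrite /Lmul (lfunE (mulL c)). Qed.

Lemma mulx0 x : mul x 0 = 0.
Proof. exact: (linear0 (mulL x)). Qed.

Lemma mulxZ x a v : mul x (a *: v) = a *: mul x v.
Proof. by rewrite -[a *: v]addr0 Hlin mulx0 addr0. Qed.

Lemma mulx_sum x n (F : 'I_n -> V) : mul x (\sum_(i < n) F i) = \sum_(i < n) mul x (F i).
Proof. exact: (linear_sum (mulL x)). Qed.

Lemma peirceP c l v : (v \in peirce mul c l) = (mul c v == l *: v).
Proof.
by rewrite /peirce memv_ker add_lfunE opp_lfunE scale_lfunE id_lfunE LmulE subr_eq0.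
Qed.

Lemma ss_key c x : semi_simple mul c -> mul c (mul c x) = 0 -> mul c x = 0.
Proof.
move=> [s [_ _ dir full]] H.
have : x \in (\sum_(i < size s) peirce mul c s`_i)%VS by rewrite full memvf.
move: H => /[swap] /memv_sumP [xs Hxs ->] H.
have Ex i : mul c (xs i) = s`_i *: xs i by apply/eqP; rewrite -peirceP; apply: Hxs.
have E1 : mul c (\sum_(i < size s) xs i) = \sum_(i < size s) s`_i *: xs i.
  by rewrite mulx_sum; apply: eq_bigr => i _; rewrite Ex.
rewrite E1 in H *.
have E2 : mul c (\sum_(i < size s) s`_i *: xs i) = \sum_(i < size s) (s`_i * s`_i) *: xs i.
  by rewrite mulx_sum; apply: eq_bigr => i _; rewrite mulxZ Ex scalerA.
rewrite E2 in H.
have Z := directv_sum_independent dir.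
have Z' := Z (fun i => (s`_i * s`_i) *: xs i).
rewrite big1 // => i _.
have : (s`_i * s`_i) *: xs i = 0.
  apply: Z' => //= j _; rewrite memvZ //; exact: Hxs.
rewrite -scalerA => /eqP; rewrite scaler_eq0 => /orP [/eqP -> | /eqP ->].
  by rewrite scale0r.
by [].
Qed.

End Helpers.

Theorem proposition4p1 (K : fieldType) (V : vectType K) (mul : V -> V -> V)
  (c : V) :
  2%N \notin [pchar K] -> 3%N \notin [pchar K] ->
  comm_alg_law mul -> medial mul ->
  c != 0 -> idem_elt mul c ->
  is_ideal mul (peirce mul c 0) /\
  (forall (B : vectType K) (mulB : B -> B -> B) (pi : 'Hom(V, B)),
     comm_alg_law mulB ->
     quotient_map mul mulB (peirce mul c 0) pi ->
     medial mulB /\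
     (semi_simple mul c -> peirce mulB (pi c) 0 = 0%VS)).
Proof.
move=> _ _ [Hcomm Hlin] Hmed _ Hid.
have Id : is_ideal mul (peirce mul c 0).
  move=> x y; rewrite !(@peirceP _ _ mul Hlin) !scale0r => /eqP Hx.
  have H : mul c (mul x y) = 0.
    by rewrite -{1}Hid Hmed Hx Hcomm (@mulx0 _ _ mul Hlin).
  by rewrite (Hcomm y x) H; split.
split => // B mulB pi [HcommB HlinB] [Himg Hker Hmor].
have surj : forall b, exists x, b = pi x.
  move=> b; have : b \in limg pi by rewrite Himg memvf.
  by move=> /memv_imgP [x _ ->]; exists x.
split.
  move=> a b d e.
  have [x ->] := surj a; have [y ->] := surj b.
  have [z ->] := surj d; have [w ->] := surj e.
  by rewrite -!Hmor Hmed.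
move=> Hss; apply/eqP; rewrite -subv0; apply/subvP => b.
rewrite (@peirceP _ _ mulB HlinB) scale0r memv0 => /eqP.
have [x ->] := surj b.
rewrite -Hmor => /eqP; rewrite -memv_ker Hker (@peirceP _ _ mul Hlin) scale0r => /eqP H.
rewrite -memv_ker Hker (@peirceP _ _ mul Hlin) scale0r; apply/eqP.
exact: (@ss_key _ _ mul Hlin).
Qed.
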